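(* Let $K$ be the division subring of $S=\mathbb{C}[[t,Q]][t^{-1},Q^{-1}]$ generated by $R=\mathbb{C}\langle t,Q,Q^{-1}\rangle/(Qt-qtQ)$, with the qsi structure ($\sigma,\theta^{*}$) extended from $R$. Then the ring of qsi constants of $K$, i.e. $\{f\in K:\sigma(f)=f,\ \theta^{(m)}(f)=0\ \forall m\ge1\}$, equals $\mathbb{C}$.
   Context: $q\in\mathbb{C}$, $q\neq0,1$, not a root of unity; $[m]_q=1+\dots+q^{m-1}$, $[m]_q!=[1]_q\cdots[m]_q$. $S$ is the ring of skew formal Laurent series in $t,Q$ with $Qt=qtQ$; every nonzero element of $S$ is invertible. On $S$ (and $R\subset S$), $\sigma$ is the continuous $\mathbb{C}$-algebra automorphism with $\sigma(t)=qt$, $\sigma(Q)=qQ$, and $\theta^{(1)}$ is the continuous $\mathbb{C}$-linear map with $\theta^{(1)}(t^iQ^j)=[i]_qt^{i-1}Q^j$ (so $\theta^{(1)}(t)=1$, $\theta^{(1)}(Q)=0$, and $\theta^{(1)}(ab)=\theta^{(1)}(a)b+\sigma(a)\theta^{(1)}(b)$); $\theta^{(m)}=\frac{1}{[m]_q!}(\theta^{(1)})^m$. $K$ is stable under these operators. *)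

(* Defs.v *)
From HB Require Import structures.
From mathcomp Require Import all_boot all_order all_algebra.
Set Implicit Arguments. Unset Strict Implicit. Unset Printing Implicit Defensive.
Import Order.TTheory GRing.Theory Num.Theory.
Local Open Scope ring_scope.

(* The field of complex numbers is modelled by an arbitrary
   numClosedFieldType C (C itself is one; the statement is thus more general).
   A formal series  sum_{i,j} f i j t^i Q^j  is represented by its coefficient
   function  f : int -> int -> C  (f i j = coefficient of t^i Q^j).        *)
Definition series (C : numClosedFieldType) := int -> int -> C.

(* Support condition of S = C((t))((Q; sigma)) : the Q-exponents are bounded
   below, and for each Q-exponent the t-exponents are bounded below.        *)
Definition isS (C : numClosedFieldType) (f : series C) : Prop :=
  (exists J : int, forall i j, j < J -> f i j = 0) /\
  (forall j, exists I : int, forall i, i < I -> f i j = 0).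

(* R = C<t,Q,Q^-1>/(Qt - qtQ), embedded in S: finite sums of c t^i Q^j with
   i >= 0, j in Z.                                                          *)
Definition inR (C : numClosedFieldType) (f : series C) : Prop :=
  exists N : nat, forall i j, f i j != 0 ->
    (0 <= i <= N%:Z) /\ (- N%:Z <= j <= N%:Z).

Definition zeroS (C : numClosedFieldType) : series C := fun _ _ => 0.
Definition constS (C : numClosedFieldType) (c : C) : series C :=
  fun i j => if (i == 0) && (j == 0) then c else 0.
Definition oneS (C : numClosedFieldType) : series C := constS 1.
Definition addS (C : numClosedFieldType) (a b : series C) : series C :=
  fun i j => a i j + b i j.
Definition oppS (C : numClosedFieldType) (a : series C) : series C :=
  fun i j => - a i j.

(* Multiplication, with  t^i Q^j * t^k Q^l = q^(j k) t^(i+k) Q^(j+l).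
   [mulS q a b c] means c = a * b: every coefficient of c is the (finite)
   sum over all (i,j) of a_(i,j) b_(m-i,n-j) q^(j (m-i)).                  *)
Definition mulS (C : numClosedFieldType) (q : C) (a b c : series C) : Prop :=
  forall m n : int, exists s : seq (int * int),
    uniq s /\
    (forall i j, a i j * b (m - i) (n - j) != 0 -> (i, j) \in s) /\
    c m n = \sum_(p <- s) a p.1 p.2 * b (m - p.1) (n - p.2) * q ^ (p.2 * (m - p.1)).

Definition divSubring (C : numClosedFieldType) (q : C) (P : series C -> Prop) : Prop :=
  (forall x, P x -> isS x) /\
  P (zeroS C) /\ P (oneS C) /\
  (forall a b, P a -> P b -> P (addS a b)) /\
  (forall a, P a -> P (oppS a)) /\
  (forall a b c, P a -> P b -> isS c -> mulS q a b c -> P c) /\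
  (forall a b, P a -> a <> zeroS C -> isS b -> mulS q a b (oneS C) -> P b).

Definition inK (C : numClosedFieldType) (q : C) (f : series C) : Prop :=
  forall P, divSubring q P -> (forall r, inR r -> P r) -> P f.

Definition sigmaS (C : numClosedFieldType) (q : C) (f : series C) : series C :=
  fun i j => q ^ (i + j) * f i j.

Definition qint (C : numClosedFieldType) (q : C) (i : int) : C :=
  (q ^ i - 1) / (q - 1).

Definition qnat (C : numClosedFieldType) (q : C) (m : nat) : C :=
  \sum_(k < m) q ^+ k.
Definition qfact (C : numClosedFieldType) (q : C) (m : nat) : C :=
  \prod_(1 <= k < m.+1) qnat q k.

(* theta^(1)(t^i Q^j) = [i]_q t^(i-1) Q^j, i.e. coefficient of t^i Q^j in
   theta^(1) f is [i+1]_q * f (i+1) j. *)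
Definition theta1 (C : numClosedFieldType) (q : C) (f : series C) : series C :=
  fun i j => qint q (i + 1) * f (i + 1) j.

Definition thetaS (C : numClosedFieldType) (q : C) (m : nat) (f : series C) : series C :=
  fun i j => (qfact q m)^-1 * iter m (theta1 q) f i j.

(* Main.v *)
Require Import Defs.
From HB Require Import structures.
From mathcomp Require Import all_boot all_order all_algebra.
From Stdlib Require Import FunctionalExtensionality.
Import Order.TTheory GRing.Theory Num.Theory.
Local Open Scope ring_scope.

Lemma expz_eq1 (C : numClosedFieldType) (q : C)
  (hq0 : q != 0) (hqroot : forall n : nat, (0 < n)%N -> q ^+ n != 1) (z : int) :
  q ^ z = 1 -> z = 0.
Proof.
case: z => n.
  case: n => [//|n] H; move: (hqroot n.+1 isT); rewrite -exprnP in H; by rewrite H eqxx.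
move=> H; have : q ^+ n.+1 = 1.
  by move: H; rewrite NegzE -invr_expz -exprnP => /(congr1 GRing.inv); rewrite invrK invr1.
by move=> H2; move: (hqroot n.+1 isT); rewrite H2 eqxx.
Qed.

Theorem mainTheorem5 (C : numClosedFieldType) (q : C)
  (hq0 : q != 0) (hq1 : q != 1) (hqroot : forall n : nat, (0 < n)%N -> q ^+ n != 1) :
  forall f : series C,
    (inK q f /\ sigmaS q f = f /\ (forall m : nat, (1 <= m)%N -> thetaS q m f = zeroS C))
    <-> (exists c : C, f = constS c).
Proof.
move=> f; split.
  move=> [_ [Hs Ht]]; exists (f 0 0).
  have Ht1 := Ht 1%N isT.
  apply: functional_extensionality => i; apply: functional_extensionality => j.
  rewrite /constS.
  case: ifP => [/andP[/eqP -> /eqP ->] //|Hij].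
  have Hs' : q ^ (i + j) * f i j = f i j by move: (congr1 (fun g => g i j) Hs).
  have Ht' : qint q i * f i j = 0.
    have := congr1 (fun g => g (i - 1) j) Ht1.
    rewrite /thetaS /zeroS /= /theta1 /qfact /qnat big_nat1 big_ord1 expr0 invr1 mul1r.
    by rewrite subrK.
  apply/eqP; apply: contraFT Hij => Hf.
  have E1 : q ^ (i + j) = 1.
    by apply: (mulIf Hf); rewrite mul1r.
  have E2 : q ^ i = 1.
    move: Ht'; rewrite /qint => /eqP; rewrite !mulf_eq0 (negbTE Hf) orbF invr_eq0.
    by rewrite [q - 1 == 0]subr_eq0 (negbTE hq1) orbF subr_eq0 => /eqP.
  have Hi := @expz_eq1 C q hq0 hqroot i E2.
  move: E1; rewrite Hi add0r => /(@expz_eq1 C q hq0 hqroot j) ->.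
  by rewrite eqxx.
move=> [c ->]; split; last split.
- move=> P _ HR; apply: HR; exists 0%N => i j; rewrite /constS.
  by case: ifP => [/andP[/eqP -> /eqP ->] _|]; rewrite ?eqxx.
- apply: functional_extensionality => i; apply: functional_extensionality => j.
  rewrite /sigmaS /constS; case: ifP => [/andP[/eqP -> /eqP ->]|]; last by rewrite mulr0.
  by rewrite addr0 expr0z mul1r.
- move=> m Hm.
  have Hz : theta1 q (zeroS C) = zeroS C.
    by apply: functional_extensionality => i; apply: functional_extensionality => j;
       rewrite /theta1 /zeroS mulr0.
  have Hc : theta1 q (constS c) = zeroS C.
    apply: functional_extensionality => i; apply: functional_extensionality => j.
    rewrite /theta1 /zeroS /constS; case: ifP => [/andP[/eqP -> _]|]; last by rewrite mulr0.
    by rewrite /qint expr0z subrr !mul0r.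
  have Hit : forall k, iter k.+1 (theta1 q) (constS c) = zeroS C.
    by elim=> [|k IH] /=; [exact: Hc | rewrite -/(iter k.+1 _ _) IH Hz].
  case: m Hm => [//|m] _.
  apply: functional_extensionality => i; apply: functional_extensionality => j.
  by rewrite /thetaS Hit /zeroS mulr0.
Qed.
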